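(* With the sets $E_n$ defined in the context, there is a constant $c>0$ independent of $n$ such that for every $n\ge2$, $$\mathrm{Fav}(E_n)\ \ge\ c\Big(\sum_{k=1}^{n-1}a_k\Big)^{-1}.$$
   Context: Construction. Let $f:\mathbb{R}\to\mathbb{R}$ be $f(x)=0$ for $x\in[0,\tfrac12)+\mathbb{Z}$ and $f(x)=\tfrac34$ for $x\in[\tfrac12,1)+\mathbb{Z}$. Let $g:\mathbb{N}\to\mathbb{R}_+$ be strictly increasing with $g(k)\to\infty$, and set $a_1=g(1)$, $a_k=\min\{1,g(k)-g(k-1)\}$ for $k\ge2$. Let $(m_k)_{k\ge1}$ be positive integers with $m_k>m_{k-1}$, $1000\cdot4^{-m_k}\le a_k4^{-m_{k-1}}$ and $1000\cdot4^{-m_k}\le a_{k-1}4^{-m_{k-1}}$ for all $k\ge2$. For $n\ge1$ define $f_n:[0,1]\to\mathbb{R}$ by $f_n(x)=f(2x)+\sum_{j=1}^{n}a_j4^{-m_j}f(2\cdot4^{m_j}x)$, let $s_n=\{0\}\times[0,4^{-m_n}]$, and $E_n=\overline{s_n+\operatorname{graph}f_n}$ (Minkowski sum, closure). Favard length: $\mathrm{Fav}(E)=\frac{1}{|S^1|}\int_{S^1}|p_\theta(E)|\,d\theta$ with $p_\theta(x)=x\cdot\theta$. *)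

(* Defs.v *)
From Stdlib Require Import Reals Lra Lia ClassicalEpsilon.
Open Scope R_scope.

Definition fstep (x : R) : R := if Rlt_dec (frac_part x) (1/2) then 0 else 3/4.

(* a_1 = g 1, a_k = min(1, g k - g (k-1)) for k >= 2 (a 0 is unused) *)
Definition acoef (g : nat -> R) (k : nat) : R :=
  match k with
  | O => 0
  | S O => g 1%nat
  | S k' => Rmin 1 (g k - g k')
  end.

Definition fn (g : nat -> R) (m : nat -> nat) (n : nat) (x : R) : R :=
  fstep (2 * x) +
  sum_f_R0 (fun i => acoef g (S i) / 4 ^ (m (S i)) * fstep (2 * 4 ^ (m (S i)) * x)) (n - 1).

(* s_n + graph f_n, with graph over [0,1] *)
Definition preE (g : nat -> R) (m : nat -> nat) (n : nat) (p : R * R) : Prop :=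
  exists x t, 0 <= x <= 1 /\ 0 <= t <= / 4 ^ (m n) /\ p = (x, fn g m n x + t).

Definition closure2 (A : R * R -> Prop) (p : R * R) : Prop :=
  forall eps, 0 < eps -> exists q, A q /\ Rabs (fst q - fst p) < eps /\ Rabs (snd q - snd p) < eps.

Definition En (g : nat -> R) (m : nat -> nat) (n : nat) : R * R -> Prop :=
  closure2 (preE g m n).

Definition proj (E : R * R -> Prop) (th : R) (y : R) : Prop :=
  exists p, E p /\ y = fst p * cos th + snd p * sin th.

(* Lebesgue (outer) measure on R via countable covers by closed intervals *)
Definition cover_sum (A : R -> Prop) (s : R) : Prop :=
  exists a b : nat -> R, (forall i, a i <= b i) /\
    (forall x, A x -> exists i, a i <= x <= b i) /\
    Un_cv (fun N => sum_f_R0 (fun i => b i - a i) N) s.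

Definition is_inf_cover (A : R -> Prop) (l : R) : Prop :=
  (forall s, cover_sum A s -> l <= s) /\
  (forall l', (forall s, cover_sum A s -> l' <= s) -> l' <= l).

Definition leb_measure (A : R -> Prop) : R :=
  epsilon (inhabits 0) (is_inf_cover A).

(* Main.v *)
Require Import Defs.
From Stdlib Require Import Reals Lra Lia ZArith List Classical ClassicalEpsilon.
Open Scope R_scope.


Definition has_cover (A : R -> Prop) := exists s, cover_sum A s.

Lemma cover_nonneg A s : cover_sum A s -> 0 <= s.
Proof.
  intros (a & b & Hab & _ & Hcv).
  assert (Hg : Un_growing (fun N => sum_f_R0 (fun i => b i - a i) N)).
  { intro n. simpl. specialize (Hab (S n)). lra. }
  pose proof (growing_ineq _ _ Hg Hcv 0%nat). simpl in H. specialize (Hab 0%nat). lra.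
Qed.

Lemma inf_ex A : has_cover A -> exists l, is_inf_cover A l.
Proof.
  intros [s0 Hs0].
  set (E := fun x => exists s, cover_sum A s /\ x = - s).
  assert (Hb : bound E).
  { exists 0. intros x [s [Hs ->]]. pose proof (cover_nonneg _ _ Hs). lra. }
  assert (Hne : exists x, E x) by (exists (- s0); exists s0; auto).
  destruct (completeness E Hb Hne) as [M [HM1 HM2]].
  exists (- M). split.
  - intros s Hs. assert (E (- s)) by (exists s; auto). specialize (HM1 _ H). lra.
  - intros l' Hl'. assert (M <= - l').
    { apply HM2. intros x [s [Hs ->]]. specialize (Hl' s Hs). lra. }
    lra.
Qed.

Lemma m_spec A : has_cover A -> is_inf_cover A (leb_measure A).
Proof. intro H. unfold leb_measure. apply epsilon_spec. apply inf_ex; auto. Qed.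

Lemma m_le A s : cover_sum A s -> leb_measure A <= s.
Proof. intro H. assert (has_cover A) by (exists s; auto). apply (proj1 (m_spec A H0)); auto. Qed.

Lemma m_ge A l : has_cover A -> (forall s, cover_sum A s -> l <= s) -> l <= leb_measure A.
Proof. intros H H1. apply (proj2 (m_spec A H)); auto. Qed.

Lemma m_nonneg A : has_cover A -> 0 <= leb_measure A.
Proof. intro H. apply m_ge; auto. intros. eapply cover_nonneg; eauto. Qed.

Lemma cover_sub (A B : R -> Prop) s : (forall x, A x -> B x) -> cover_sum B s -> cover_sum A s.
Proof.
  intros HAB (a & b & H1 & H2 & H3). exists a, b. split; [|split]; auto.
Qed.

Lemma cover_empty : cover_sum (fun _ => False) 0.
Proof.
  exists (fun _ => 0), (fun _ => 0). split; [|split].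
  - intros; lra.
  - intros ? [].
  - intros eps Heps. exists 0%nat. intros n _.
    assert (sum_f_R0 (fun _ : nat => 0 - 0) n = 0).
    { induction n; simpl; [lra|rewrite IHn; lra]. }
    rewrite H. unfold R_dist. rewrite Rminus_0_r, Rabs_R0. auto.
Qed.

Lemma cover_add A s a b : cover_sum A s -> a <= b ->
  cover_sum (fun x => A x \/ (a <= x <= b)) (s + (b - a)).
Proof.
  intros (a0 & b0 & H1 & H2 & H3) Hab.
  exists (fun i => match i with O => a | S j => a0 j end),
         (fun i => match i with O => b | S j => b0 j end).
  split; [|split].
  - intros [|i]; auto.
  - intros x [Hx|Hx].
    + destruct (H2 x Hx) as [i Hi]. exists (S i). auto.
    + exists 0%nat. auto.
  - intros eps Heps. destruct (H3 eps Heps) as [N HN]. exists (S N).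
    intros n Hn. destruct n as [|n]; [lia|].
    rewrite decomp_sum by lia. simpl pred.
    specialize (HN n ltac:(lia)). unfold R_dist in *.
    replace (b - a + sum_f_R0 (fun i => b0 i - a0 i) n - (s + (b - a)))
      with (sum_f_R0 (fun i => b0 i - a0 i) n - s) by ring. auto.
Qed.

Lemma has_cover_sub (A B : R -> Prop) : (forall x, A x -> B x) -> has_cover B -> has_cover A.
Proof. intros H [s Hs]. exists s. eapply cover_sub; eauto. Qed.


Fixpoint suml (l : list (R * R)) : R :=
  match l with nil => 0 | p :: l' => Rmax 0 (snd p - fst p) + suml l' end.

Lemma suml_nonneg l : 0 <= suml l.
Proof. induction l; simpl; [lra|]. pose proof (Rmax_l 0 (snd a - fst a)). lra. Qed.

Lemma suml_app l1 l2 : suml (l1 ++ l2) = suml l1 + suml l2.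
Proof. induction l1; simpl; [lra|]. rewrite IHl1. ring. Qed.

Lemma fin_cover_aux n : forall l a b, (length l <= n)%nat ->
  (forall x, a <= x <= b -> exists p, In p l /\ fst p < x < snd p) -> b - a <= suml l.
Proof.
  induction n; intros l a b Hlen Hcov.
  - destruct (Rle_lt_dec a b) as [Hab|Hab].
    + destruct (Hcov a ltac:(lra)) as [p [Hp _]]. destruct l; simpl in *; [contradiction|lia].
    + pose proof (suml_nonneg l). lra.
  - destruct (Rle_lt_dec a b) as [Hab|Hab].
    2:{ pose proof (suml_nonneg l). lra. }
    destruct (Hcov a ltac:(lra)) as [[c d] [Hp Hcd]]. simpl in Hcd.
    destruct (in_split _ _ Hp) as [l1 [l2 ->]].
    rewrite suml_app. simpl. pose proof (Rmax_r 0 (d - c)).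
    pose proof (suml_nonneg l1). pose proof (suml_nonneg l2).
    destruct (Rlt_le_dec b d) as [Hbd|Hbd].
    + lra.
    + assert (IH : b - d <= suml (l1 ++ l2)).
      { apply IHn.
        - rewrite length_app in *. simpl in Hlen. lia.
        - intros x Hx. destruct (Hcov x ltac:(lra)) as [p' [Hp' Hx']].
          exists p'. split; auto. apply in_app_or in Hp'. destruct Hp' as [Hq|Hq].
          + apply in_or_app; auto.
          + destruct Hq as [Hq|Hq].
            * subst p'. simpl in Hx'. lra.
            * apply in_or_app; auto. }
      rewrite suml_app in IH. lra.
Qed.

Lemma fin_cover l a b :
  (forall x, a <= x <= b -> exists p, In p l /\ fst p < x < snd p) -> b - a <= suml l.
Proof. intros. eapply fin_cover_aux; eauto. Qed.

Lemma compact_nat (c d : nat -> R) a b : a <= b ->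
  (forall x, a <= x <= b -> exists i, c i < x < d i) ->
  exists n, forall x, a <= x <= b -> exists i, (i <= n)%nat /\ c i < x < d i.
Proof.
  intros Hab Hcov.
  set (Y := fun x => a <= x <= b /\ exists n, forall y, a <= y <= x ->
         exists i, (i <= n)%nat /\ c i < y < d i).
  assert (HYa : Y a).
  { split; [lra|]. destruct (Hcov a ltac:(lra)) as [i Hi]. exists i.
    intros y Hy. exists i. split; [lia|]. replace y with a by lra. auto. }
  assert (Hb : bound Y) by (exists b; intros x [Hx _]; lra).
  destruct (completeness Y Hb (ex_intro _ a HYa)) as [xs [Hub Hlub]].
  assert (Hxa : a <= xs) by (apply Hub; auto).
  assert (Hxb : xs <= b) by (apply Hlub; intros x [Hx _]; lra).
  destruct (Hcov xs ltac:(lra)) as [j Hj].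
  assert (Hy : exists y, Y y /\ c j < y).
  { apply NNPP. intro Hn. assert (xs <= c j).
    { apply Hlub. intros x Hx. destruct (Rle_lt_dec x (c j)); auto.
      exfalso. apply Hn. exists x. auto. }
    lra. }
  destruct Hy as [y [[Hy1 [n Hn]] Hyc]].
  set (z := Rmin b ((xs + d j) / 2)).
  assert (HYz : Y z).
  { split.
    - unfold z. split; [apply Rmin_glb; lra| apply Rmin_l].
    - exists (Nat.max n j). intros w Hw.
      destruct (Rle_lt_dec w y) as [Hwy|Hwy].
      + destruct (Hn w ltac:(lra)) as [i [Hi1 Hi2]]. exists i. split; [lia|auto].
      + exists j. split; [lia|]. split; [lra|].
        assert (z <= (xs + d j)/2) by apply Rmin_r. lra. }
  assert (Hz : z <= xs) by (apply Hub; auto).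
  assert (Hzb : z = b).
  { unfold z in *. unfold Rmin in *. destruct (Rle_dec b ((xs + d j)/2)); lra. }
  destruct HYz as [_ [n' Hn']]. rewrite Hzb in Hn'. exists n'. auto.
Qed.

Lemma geom_sum n : sum_f_R0 (fun i => / 2 ^ S i) n = 1 - / 2 ^ S n.
Proof.
  induction n.
  - simpl. field.
  - rewrite tech5, IHn. assert (0 < 2 ^ S n) by (apply pow_lt; lra).
    replace (2 ^ S (S n)) with (2 * 2 ^ S n) by (simpl; ring). field. lra.
Qed.

Lemma suml_seq (c d : nat -> R) n :
  suml (map (fun i => (c i, d i)) (seq 0 (S n))) = sum_f_R0 (fun i => Rmax 0 (d i - c i)) n.
Proof.
  induction n.
  - simpl. ring.
  - rewrite seq_S, map_app, suml_app, IHn, tech5. simpl. ring.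
Qed.

Lemma HB a b s : a <= b -> cover_sum (fun x => a <= x <= b) s -> b - a <= s.
Proof.
  intros Hab (a0 & b0 & Hle & Hcov & Hcv).
  assert (Heps : forall eps, 0 < eps -> b - a <= s + eps).
  { intros eps Heps.
    set (e := fun i : nat => eps / 2 ^ S (S i)).
    assert (He : forall i, 0 < e i) by (intro i; unfold e; apply Rdiv_lt_0_compat; [lra|apply pow_lt; lra]).
    destruct (compact_nat (fun i => a0 i - e i) (fun i => b0 i + e i) a b Hab) as [n Hn].
    { intros x Hx. destruct (Hcov x Hx) as [i Hi]. exists i. specialize (He i). lra. }
    set (l := map (fun i => (a0 i - e i, b0 i + e i)) (seq 0 (S n))).
    assert (H1 : b - a <= suml l).
    { apply fin_cover. intros x Hx. destruct (Hn x Hx) as [i [Hi1 Hi2]].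
      exists (a0 i - e i, b0 i + e i). split; auto. unfold l. apply (in_map (fun i => (a0 i - e i, b0 i + e i))).
      apply in_seq. lia. }
    unfold l in H1. rewrite suml_seq in H1.
    assert (H2 : sum_f_R0 (fun i => Rmax 0 (b0 i + e i - (a0 i - e i))) n =
                 sum_f_R0 (fun i => b0 i - a0 i) n + eps * sum_f_R0 (fun i => / 2 ^ S i) n).
    { rewrite scal_sum. rewrite <- sum_plus. apply sum_eq. intros i _.
      rewrite Rmax_right. 2:{ specialize (Hle i). specialize (He i). lra. }
      unfold e. simpl. field. apply pow_nonzero. lra. }
    rewrite H2, geom_sum in H1.
    assert (Hg : Un_growing (fun N => sum_f_R0 (fun i => b0 i - a0 i) N)).
    { intro k. simpl. specialize (Hle (S k)). lra. }
    pose proof (growing_ineq _ _ Hg Hcv n).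
    assert (0 < / 2 ^ S n) by (apply Rinv_0_lt_compat, pow_lt; lra).
    nra. }
  destruct (Rle_lt_dec (b - a) s); auto.
  specialize (Heps ((b - a - s)/2) ltac:(lra)). lra.
Qed.


Lemma frac_eq (y : R) (z : Z) : IZR z <= y < IZR z + 1 -> frac_part y = y - IZR z.
Proof.
  intros [H1 H2]. unfold frac_part, Int_part.
  assert (up y = (z + 1)%Z).
  { symmetry. apply tech_up; rewrite plus_IZR; lra. }
  rewrite H. replace (z + 1 - 1)%Z with z by ring. auto.
Qed.

Lemma fstep_lo (y : R) (t : nat) : INR t <= y < INR t + 1/2 -> fstep y = 0.
Proof.
  intros H. unfold fstep. rewrite INR_IZR_INZ in H.
  rewrite (frac_eq y (Z.of_nat t)) by lra.
  destruct (Rlt_dec _ _); auto. lra.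
Qed.

Lemma fstep_hi (y : R) (t : nat) : INR t + 1/2 <= y < INR t + 1 -> fstep y = 3/4.
Proof.
  intros H. unfold fstep. rewrite INR_IZR_INZ in H.
  rewrite (frac_eq y (Z.of_nat t)) by lra.
  destruct (Rlt_dec _ _); auto. lra.
Qed.

Definition val (M e k : nat) : R := if Nat.odd (k / 4 ^ (M - e)) then 3/4 else 0.

Lemma INR4 : INR 4 = 4.
Proof. simpl. ring. Qed.

Lemma fstep_val M e k x : (e <= M)%nat ->
  INR k / 4 ^ (S M) <= x < (INR k + 1) / 4 ^ (S M) ->
  fstep (2 * 4 ^ e * x) = val M e k.
Proof.
  intros HeM Hx.
  set (q := (4 ^ (M - e))%nat).
  assert (Hq0 : (q <> 0)%nat) by (unfold q; apply Nat.pow_nonzero; lia).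
  set (u := (k / q)%nat). set (v := (k mod q)%nat).
  assert (Hk : k = (q * u + v)%nat) by (unfold u, v; apply Nat.div_mod_eq).
  assert (Hv : (v < q)%nat) by (unfold v; apply Nat.mod_upper_bound; auto).
  assert (Hqr : INR q = 4 ^ (M - e)) by (unfold q; rewrite pow_INR, INR4; auto).
  assert (HP : 4 ^ S M = 4 ^ S e * INR q).
  { rewrite Hqr, <- pow_add. f_equal. lia. }
  assert (Hpe : 0 < 4 ^ S e) by (apply pow_lt; lra).
  assert (HqR : 1 <= INR q) by (apply (le_INR 1); lia).
  assert (Hkr : INR k = INR q * INR u + INR v) by (rewrite Hk, plus_INR, mult_INR; auto).
  assert (Hvr : INR v + 1 <= INR q) by (rewrite <- S_INR; apply le_INR; lia).
  assert (Hv0 : 0 <= INR v) by apply pos_INR.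
  rewrite HP in Hx.
  set (z := 4 ^ S e * x).
  assert (Hz1 : INR u <= z).
  { unfold z. destruct Hx as [Hx _].
    apply Rmult_le_reg_r with (r := INR q); [lra|].
    apply Rle_trans with (INR k); [nra|].
    apply (Rmult_le_reg_r (/ (4 ^ S e * INR q))).
    { apply Rinv_0_lt_compat. nra. }
    replace (INR k * / (4 ^ S e * INR q)) with (INR k / (4 ^ S e * INR q)) by (unfold Rdiv; auto).
    replace (4 ^ S e * x * INR q * / (4 ^ S e * INR q)) with x by (field; lra). lra. }
  assert (Hz2 : z < INR u + 1).
  { unfold z. destruct Hx as [_ Hx].
    apply Rmult_lt_reg_r with (r := INR q); [lra|].
    apply Rlt_le_trans with (INR k + 1); [|nra].
    apply (Rmult_lt_reg_r (/ (4 ^ S e * INR q))).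
    { apply Rinv_0_lt_compat. nra. }
    replace (4 ^ S e * x * INR q * / (4 ^ S e * INR q)) with x by (field; lra).
    replace ((INR k + 1) * / (4 ^ S e * INR q)) with ((INR k + 1) / (4 ^ S e * INR q)) by (unfold Rdiv; auto).
    lra. }
  assert (Hyz : 2 * 4 ^ e * x = z / 2) by (unfold z; simpl; field).
  rewrite Hyz. unfold val. fold q. fold u.
  destruct (Nat.Even_or_Odd u) as [[t Ht]|[t Ht]].
  - assert (Nat.odd u = false).
    { rewrite Ht. rewrite Nat.odd_mul. simpl. auto. }
    rewrite H. apply (fstep_lo _ t). rewrite Ht in Hz1, Hz2. rewrite mult_INR in Hz1, Hz2.
    simpl in Hz1, Hz2. lra.
  - assert (Nat.odd u = true).
    { apply Nat.odd_spec. exists t. auto. }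
    rewrite H. apply (fstep_hi _ t). rewrite Ht in Hz1, Hz2.
    rewrite plus_INR, mult_INR in Hz1, Hz2. simpl in Hz1, Hz2. lra.
Qed.


Definition plo (x0 w y0 h th : R) := x0 * cos th + y0 * sin th + Rmin 0 (w * cos th) + Rmin 0 (h * sin th).
Definition phi (x0 w y0 h th : R) := x0 * cos th + y0 * sin th + Rmax 0 (w * cos th) + Rmax 0 (h * sin th).

Lemma seg_bound a w c : 0 <= a <= w -> Rmin 0 (w * c) <= a * c <= Rmax 0 (w * c).
Proof.
  intros Ha. unfold Rmin, Rmax.
  destruct (Rle_dec 0 (w * c)); destruct (Rle_dec 0 c).
  - split; nra.
  - assert (w * c <= 0) by nra. split; nra.
  - split; nra.
  - split; nra.
Qed.

Lemma rect_proj x0 w y0 h th x v : x0 <= x <= x0 + w -> y0 <= v <= y0 + h ->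
  plo x0 w y0 h th <= x * cos th + v * sin th <= phi x0 w y0 h th.
Proof.
  intros Hx Hv. unfold plo, phi.
  pose proof (seg_bound (x - x0) w (cos th) ltac:(lra)).
  pose proof (seg_bound (v - y0) h (sin th) ltac:(lra)).
  replace (x * cos th) with (x0 * cos th + (x - x0) * cos th) by ring.
  replace (v * sin th) with (y0 * sin th + (v - y0) * sin th) by ring.
  lra.
Qed.

Lemma seg_inner w c s : 0 <= w -> 0 < s < 1 -> exists a, 0 <= a /\ (a < w \/ a = 0) /\
   a * c = Rmin 0 (w * c) + s * (Rmax 0 (w * c) - Rmin 0 (w * c)).
Proof.
  intros Hw Hs. destruct (Rle_dec 0 c).
  - exists (s * w). unfold Rmin, Rmax.
    destruct (Rle_dec 0 (w * c)); [|nra].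
    split; [nra|]. split; [|ring].
    destruct (Req_dec w 0); [right; subst; ring| left; nra].
  - exists ((1 - s) * w). unfold Rmin, Rmax.
    destruct (Rle_dec 0 (w * c)).
    + assert (w = 0) by nra. subst. split; [lra|]. split; [right; ring|ring].
    + split; [nra|]. split; [|ring]. left. nra.
Qed.

Lemma rect_inner x0 w y0 h th y : 0 <= w -> 0 <= h ->
  plo x0 w y0 h th < y < phi x0 w y0 h th ->
  exists x v, x0 <= x /\ (x < x0 + w \/ x = x0) /\ y0 <= v <= y0 + h /\
    y = x * cos th + v * sin th.
Proof.
  intros Hw Hh Hy.
  set (lo := plo x0 w y0 h th) in *. set (hi := phi x0 w y0 h th) in *.
  set (s := (y - lo) / (hi - lo)).
  assert (Hs : 0 < s < 1).
  { unfold s. split.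
    - apply Rdiv_lt_0_compat; lra.
    - apply (Rmult_lt_reg_r (hi - lo)); [lra|]. unfold Rdiv. rewrite Rmult_assoc, Rinv_l; lra. }
  assert (Hys : y = lo + s * (hi - lo)) by (unfold s; field; lra).
  destruct (seg_inner w (cos th) s Hw Hs) as [a [Ha1 [Ha2 Ha3]]].
  destruct (seg_inner h (sin th) s Hh Hs) as [b [Hb1 [Hb2 Hb3]]].
  exists (x0 + a), (y0 + b). split; [lra|]. split.
  { destruct Ha2; [left; lra| right; lra]. }
  split. { split; [lra|]. destruct Hb2; lra. }
  rewrite Hys. unfold lo, hi, plo, phi.
  replace ((x0 + a) * cos th + (y0 + b) * sin th) with (x0 * cos th + y0 * sin th + a * cos th + b * sin th) by ring.
  rewrite Ha3, Hb3. ring.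
Qed.

Definition Uint (lo hi : nat -> R) (K : nat) (y : R) := exists k, (k <= K)%nat /\ lo k <= y <= hi k.

Lemma Uint_closed lo hi K y : ~ Uint lo hi K y ->
  exists d, 0 < d /\ forall z, Rabs (z - y) < d -> ~ Uint lo hi K z.
Proof.
  induction K; intro Hn.
  - assert (Hy : ~ (lo 0%nat <= y <= hi 0%nat)) by (intro; apply Hn; exists 0%nat; split; auto).
    destruct (Rlt_le_dec y (lo 0%nat)).
    + exists (lo 0%nat - y). split; [lra|]. intros z Hz [k [Hk Hk2]].
      assert (k = 0%nat) by lia. subst. apply Rabs_def2 in Hz. lra.
    + assert (hi 0%nat < y) by (destruct (Rle_lt_dec y (hi 0%nat)); [exfalso; apply Hy; lra|lra]).
      exists (y - hi 0%nat). split; [lra|]. intros z Hz [k [Hk Hk2]].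
      assert (k = 0%nat) by lia. subst. apply Rabs_def2 in Hz. lra.
  - assert (Hn1 : ~ Uint lo hi K y) by (intros [k [Hk Hk2]]; apply Hn; exists k; split; auto).
    assert (Hy : ~ (lo (S K) <= y <= hi (S K))) by (intro; apply Hn; exists (S K); split; auto).
    destruct (IHK Hn1) as [d1 [Hd1 H1]].
    assert (exists d2, 0 < d2 /\ forall z, Rabs (z - y) < d2 -> ~ (lo (S K) <= z <= hi (S K))) as [d2 [Hd2 H2]].
    { destruct (Rlt_le_dec y (lo (S K))).
      + exists (lo (S K) - y). split; [lra|]. intros z Hz Hk2. apply Rabs_def2 in Hz. lra.
      + assert (hi (S K) < y) by (destruct (Rle_lt_dec y (hi (S K))); [exfalso; apply Hy; lra|lra]).
        exists (y - hi (S K)). split; [lra|]. intros z Hz Hk2. apply Rabs_def2 in Hz. lra. }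
    exists (Rmin d1 d2). split; [apply Rmin_glb_lt; auto|].
    intros z Hz [k [Hk Hk2]].
    pose proof (Rmin_l d1 d2). pose proof (Rmin_r d1 d2).
    assert (Rabs (z - y) < d1) by lra.
    assert (Rabs (z - y) < d2) by lra.
    destruct (Nat.eq_dec k (S K)).
    + subst. apply (H2 z); auto.
    + apply (H1 z); auto. exists k. split; auto. lia.
Qed.

Lemma proj_closure (A : R * R -> Prop) lo hi K th y :
  (forall p, A p -> Uint lo hi K (fst p * cos th + snd p * sin th)) ->
  proj (closure2 A) th y -> Uint lo hi K y.
Proof.
  intros HA [p [Hp ->]]. apply NNPP. intro Hn.
  destruct (Uint_closed _ _ _ _ Hn) as [d [Hd Hd2]].
  destruct (Hp (d / 2) ltac:(lra)) as [q [Hq [H1 H2]]].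
  apply (Hd2 (fst q * cos th + snd q * sin th)); auto.
  replace (fst q * cos th + snd q * sin th - (fst p * cos th + snd p * sin th))
    with ((fst q - fst p) * cos th + (snd q - snd p) * sin th) by ring.
  eapply Rle_lt_trans; [apply Rabs_triang|].
  rewrite !Rabs_mult.
  pose proof (COS_bound th). pose proof (SIN_bound th).
  assert (Rabs (cos th) <= 1) by (apply Rabs_le; lra).
  assert (Rabs (sin th) <= 1) by (apply Rabs_le; lra).
  pose proof (Rabs_pos (fst q - fst p)). pose proof (Rabs_pos (snd q - snd p)).
  nra.
Qed.


Definition cf (g : nat -> R) (m : nat -> nat) (i : nat) := acoef g (S i) / 4 ^ m (S i).
Definition V g m n k := val (m n) 0 k + sum_f_R0 (fun i => cf g m i * val (m n) (m (S i)) k) (n - 1).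

Definition mmono (m : nat -> nat) (n : nat) := forall i, (i <= n - 1)%nat -> (m (S i) <= m n)%nat.

Lemma fn_V g m n k x : mmono m n ->
  INR k / 4 ^ S (m n) <= x < (INR k + 1) / 4 ^ S (m n) -> fn g m n x = V g m n k.
Proof.
  intros Hm Hx. unfold fn, V.
  replace (2 * x) with (2 * 4 ^ 0 * x) by (simpl; ring).
  rewrite (fstep_val (m n) 0 k x) by (auto; lia). f_equal.
  apply sum_eq. intros i Hi. unfold cf. rewrite (fstep_val (m n) (m (S i)) k x); auto.
Qed.

Definition NN (m : nat -> nat) n : nat := (4 ^ S (m n))%nat.
Definition Nr (m : nat -> nat) n : R := 4 ^ S (m n).
Definition hh (m : nat -> nat) n : R := / 4 ^ (m n).
Definition X0 m n k := INR k / Nr m n.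
Definition W m n k := if Nat.ltb k (NN m n) then / Nr m n else 0.
Definition LO g m n th k := plo (X0 m n k) (W m n k) (V g m n k) (hh m n) th.
Definition HI g m n th k := phi (X0 m n k) (W m n k) (V g m n k) (hh m n) th.

Lemma NN_Nr m n : INR (NN m n) = Nr m n.
Proof. unfold NN, Nr. rewrite pow_INR, INR4. auto. Qed.

Lemma Nr_pos m n : 0 < Nr m n.
Proof. unfold Nr. apply pow_lt. lra. Qed.

Lemma hh_pos m n : 0 < hh m n.
Proof. unfold hh. apply Rinv_0_lt_compat, pow_lt. lra. Qed.

Lemma W_nonneg m n k : 0 <= W m n k.
Proof. unfold W. destruct (Nat.ltb _ _); [left; apply Rinv_0_lt_compat, Nr_pos|lra]. Qed.

Lemma floor_nat z : 0 <= z -> exists k : nat, INR k <= z < INR k + 1.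
Proof.
  intros Hz. destruct (base_Int_part z) as [H1 H2].
  assert (Hi : (0 <= Int_part z)%Z).
  { assert (IZR (-1) < IZR (Int_part z)) by lra. apply lt_IZR in H. lia. }
  exists (Z.to_nat (Int_part z)). rewrite INR_IZR_INZ, Z2Nat.id by auto. lra.
Qed.

Lemma x_piece m n x : 0 <= x <= 1 ->
  exists k, (k <= NN m n)%nat /\ X0 m n k <= x < (INR k + 1) / Nr m n /\
            (x <= X0 m n k + W m n k).
Proof.
  intros Hx. pose proof (Nr_pos m n) as HN.
  destruct (floor_nat (x * Nr m n) ltac:(nra)) as [k [Hk1 Hk2]].
  assert (HkN : (k <= NN m n)%nat).
  { apply INR_le. rewrite NN_Nr. nra. }
  exists k. unfold X0. split; auto.
  assert (INR k / Nr m n <= x).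
  { apply (Rmult_le_reg_r (Nr m n)); auto. unfold Rdiv. rewrite Rmult_assoc, Rinv_l; lra. }
  assert (x < (INR k + 1) / Nr m n).
  { apply (Rmult_lt_reg_r (Nr m n)); auto. unfold Rdiv. rewrite Rmult_assoc, Rinv_l; lra. }
  split; [split; auto|].
  unfold W. destruct (Nat.ltb_spec k (NN m n)).
  - replace (INR k / Nr m n + / Nr m n) with ((INR k + 1) / Nr m n) by (field; lra). lra.
  - assert (k = NN m n) by lia. subst. rewrite NN_Nr in *.
    replace (Nr m n / Nr m n) with 1 in * by (field; lra). lra.
Qed.

Lemma preE_in g m n th p : mmono m n -> preE g m n p ->
  Uint (LO g m n th) (HI g m n th) (NN m n) (fst p * cos th + snd p * sin th).
Proof.
  intros Hm (x & t & Hx & Ht & ->). simpl.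
  destruct (x_piece m n x Hx) as [k [Hk [Hx1 Hx2]]].
  exists k. split; auto.
  rewrite (fn_V g m n k x Hm) by (unfold X0, Nr in Hx1; unfold Nr in Hx1; lra).
  apply rect_proj; [lra|]. unfold hh. lra.
Qed.

Lemma proj_En_out g m n th y : mmono m n -> proj (En g m n) th y ->
  Uint (LO g m n th) (HI g m n th) (NN m n) y.
Proof.
  intros Hm. apply proj_closure. intros p Hp. apply preE_in; auto.
Qed.

Lemma proj_En_in g m n th k y : mmono m n -> (k <= NN m n)%nat ->
  LO g m n th k < y < HI g m n th k -> proj (En g m n) th y.
Proof.
  intros Hm Hk Hy.
  destruct (rect_inner _ _ _ _ th y (W_nonneg m n k) (Rlt_le _ _ (hh_pos m n)) Hy)
    as [x [v [Hx1 [Hx2 [Hv ->]]]]].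
  pose proof (Nr_pos m n) as HN.
  assert (HX : 0 <= X0 m n k) by (unfold X0; unfold Rdiv; apply Rmult_le_pos; [apply pos_INR|left; apply Rinv_0_lt_compat; lra]).
  assert (Hpiece : X0 m n k <= x < (INR k + 1) / Nr m n /\ x <= 1).
  { unfold W in Hx2. destruct (Nat.ltb_spec k (NN m n)).
    - assert (INR k + 1 <= Nr m n) by (rewrite <- NN_Nr, <- S_INR; apply le_INR; lia).
      assert (X0 m n k + / Nr m n = (INR k + 1) / Nr m n) by (unfold X0; field; lra).
      assert ((INR k + 1) / Nr m n <= 1).
      { apply (Rmult_le_reg_r (Nr m n)); auto. unfold Rdiv. rewrite Rmult_assoc, Rinv_l; lra. }
      assert (0 < / Nr m n) by (apply Rinv_0_lt_compat; lra). destruct Hx2; lra.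
    - assert (k = NN m n) by lia. subst.
      assert (X0 m n (NN m n) = 1) by (unfold X0; rewrite NN_Nr; field; lra).
      assert ((INR (NN m n) + 1) / Nr m n > 1).
      { rewrite NN_Nr. apply (Rmult_lt_reg_r (Nr m n)); auto. unfold Rdiv. rewrite Rmult_assoc, Rinv_l; lra. }
      destruct Hx2; lra. }
  exists (x, v). split.
  - intros eps Heps. exists (x, v). split.
    + exists x, (v - V g m n k). split; [lra|]. split.
      * unfold hh in Hv. lra.
      * rewrite (fn_V g m n k x Hm) by (unfold X0, Nr in Hpiece; lra). f_equal. ring.
    + simpl. rewrite !Rminus_diag, Rabs_R0. lra.
  - simpl. auto.
Qed.


Lemma Uint_cover lo hi K : (forall k, lo k <= hi k) ->
  cover_sum (Uint lo hi K) (sum_f_R0 (fun k => hi k - lo k) K).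
Proof.
  intros Hle. induction K.
  - simpl. replace (hi 0%nat - lo 0%nat) with (0 + (hi 0%nat - lo 0%nat)) by ring.
    eapply cover_sub; [|apply (cover_add _ _ (lo 0%nat) (hi 0%nat) cover_empty (Hle 0%nat))].
    intros x [k [Hk Hx]]. right. assert (k = 0%nat) by lia. subst. auto.
  - simpl. eapply cover_sub; [|apply (cover_add _ _ (lo (S K)) (hi (S K)) IHK (Hle (S K)))].
    intros x [k [Hk Hx]]. destruct (Nat.eq_dec k (S K)).
    + subst. right. auto.
    + left. exists k. split; auto. lia.
Qed.

Lemma abs_le_inv x a : Rabs x <= a -> - a <= x <= a.
Proof. intros H. pose proof (Rle_abs x). pose proof (Rle_abs (- x)). rewrite Rabs_Ropp in H1. lra. Qed.

Definition Fam (c d e f : nat -> R) (K : nat) (x : R) :=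
  exists k, (k <= K)%nat /\ ((c k <= x <= d k) \/ (e k <= x <= f k)).

Lemma Fam_cover A s c d e f K : cover_sum A s -> (forall k, c k <= d k) -> (forall k, e k <= f k) ->
  cover_sum (fun x => A x \/ Fam c d e f K x)
    (s + sum_f_R0 (fun k => (d k - c k) + (f k - e k)) K).
Proof.
  intros HA Hcd Hef. induction K.
  - simpl. pose proof (cover_add _ _ _ _ HA (Hcd 0%nat)) as H1.
    pose proof (cover_add _ _ _ _ H1 (Hef 0%nat)) as H2.
    replace (s + (d 0%nat - c 0%nat + (f 0%nat - e 0%nat))) with
      (s + (d 0%nat - c 0%nat) + (f 0%nat - e 0%nat)) by ring.
    eapply cover_sub; [|exact H2]. intros x [Hx|[k [Hk Hx]]].
    + left. left. auto.
    + assert (k = 0%nat) by lia. subst. destruct Hx; [left; right|right]; auto.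
  - simpl. pose proof (cover_add _ _ _ _ IHK (Hcd (S K))) as H1.
    pose proof (cover_add _ _ _ _ H1 (Hef (S K))) as H2.
    replace (s + (sum_f_R0 (fun k => d k - c k + (f k - e k)) K + (d (S K) - c (S K) + (f (S K) - e (S K)))))
      with (s + sum_f_R0 (fun k => d k - c k + (f k - e k)) K + (d (S K) - c (S K)) + (f (S K) - e (S K))) by ring.
    eapply cover_sub; [|exact H2]. intros x [Hx|[k [Hk Hx]]].
    + left. left. left. auto.
    + destruct (Nat.eq_dec k (S K)).
      * subst. destruct Hx; [left; right|right]; auto.
      * left. left. right. exists k. split; [lia|auto].
Qed.

Lemma sum_const_R (c : R) K : sum_f_R0 (fun _ => c) K = INR (S K) * c.
Proof. induction K; [simpl; ring|]. rewrite tech5, IHK, !S_INR. ring. Qed.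

Lemma meas_shift (A B : R -> Prop) lo hi lo' hi' K dl :
  0 <= dl ->
  (forall y, A y -> Uint lo hi K y) ->
  (forall k y, (k <= K)%nat -> lo' k < y < hi' k -> B y) ->
  (forall k, (k <= K)%nat -> Rabs (lo k - lo' k) <= dl /\ Rabs (hi k - hi' k) <= dl) ->
  has_cover B ->
  leb_measure A <= leb_measure B + INR (S K) * (4 * dl).
Proof.
  intros Hdl HA HB Hd HcB.
  assert (H : leb_measure A - INR (S K) * (4 * dl) <= leb_measure B).
  { apply m_ge; auto. intros s Hs.
    set (c := fun k => lo' k - dl). set (d := fun k => lo' k + dl).
    set (e := fun k => hi' k - dl). set (f := fun k => hi' k + dl).
    pose proof (Fam_cover B s c d e f K Hs) as HF.
    assert (Hcov : cover_sum A (s + sum_f_R0 (fun k => d k - c k + (f k - e k)) K)).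
    { eapply cover_sub; [|apply HF; intro k; unfold c, d, e, f; lra].
      intros y Hy. destruct (HA y Hy) as [k [Hk Hyk]].
      destruct (Hd k Hk) as [H1 H2]. apply abs_le_inv in H1. apply abs_le_inv in H2.
      destruct (Rle_lt_dec y (lo' k)).
      - right. exists k. split; auto. left. unfold c, d. lra.
      - destruct (Rle_lt_dec (hi' k) y).
        + right. exists k. split; auto. right. unfold e, f. lra.
        + left. apply (HB k y Hk). lra. }
    pose proof (m_le _ _ Hcov).
    assert (sum_f_R0 (fun k => d k - c k + (f k - e k)) K = INR (S K) * (4 * dl)).
    { rewrite <- sum_const_R. apply sum_eq. intros. unfold c, d, e, f. ring. }
    lra. }
  lra.
Qed.

Lemma Rmin0_lip a b : Rabs (Rmin 0 a - Rmin 0 b) <= Rabs (a - b).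
Proof.
  unfold Rmin. destruct (Rle_dec 0 a); destruct (Rle_dec 0 b);
  unfold Rabs; repeat destruct (Rcase_abs _); lra.
Qed.

Lemma Rmax0_lip a b : Rabs (Rmax 0 a - Rmax 0 b) <= Rabs (a - b).
Proof.
  unfold Rmax. destruct (Rle_dec 0 a); destruct (Rle_dec 0 b);
  unfold Rabs; repeat destruct (Rcase_abs _); lra.
Qed.

Lemma abs_sin_le z : Rabs (sin z) <= Rabs z.
Proof.
  assert (Hpos : forall z, 0 <= z -> Rabs (sin z) <= z).
  { intros y Hy. destruct (Req_dec y 0). { subst. rewrite sin_0, Rabs_R0. lra. }
    pose proof (sin_lt_x y ltac:(lra)). pose proof (SIN_bound y).
    destruct (Rle_lt_dec y 1).
    - assert (0 <= sin y) by (apply sin_ge_0; pose proof PI2_3_2; lra).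
      rewrite Rabs_right; lra.
    - apply Rabs_le. split; lra. }
  destruct (Rle_lt_dec 0 z).
  - rewrite (Rabs_right z) by lra. auto.
  - rewrite (Rabs_left z) by lra.
    assert (Hs : sin z = - sin (- z)) by (rewrite sin_neg; ring). rewrite Hs, Rabs_Ropp.
    apply Hpos. lra.
Qed.

Lemma cos_lip a b : Rabs (cos a - cos b) <= Rabs (a - b).
Proof.
  rewrite form2. rewrite !Rabs_mult.
  pose proof (abs_sin_le ((a - b) / 2)). pose proof (SIN_bound ((a + b) / 2)).
  assert (Rabs (sin ((a + b) / 2)) <= 1) by (apply Rabs_le; split; lra).
  replace (Rabs ((a - b) / 2)) with (Rabs (a - b) / 2) in H.
  2:{ unfold Rdiv. rewrite Rabs_mult, (Rabs_right (/2)) by lra. auto. }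
  replace (Rabs (-2)) with 2 by (rewrite Rabs_left; lra).
  pose proof (Rabs_pos (sin ((a - b) / 2))). pose proof (Rabs_pos (sin ((a + b) / 2))). nra.
Qed.

Lemma sin_lip a b : Rabs (sin a - sin b) <= Rabs (a - b).
Proof.
  rewrite form4. rewrite !Rabs_mult.
  pose proof (abs_sin_le ((a - b) / 2)). pose proof (COS_bound ((a + b) / 2)).
  assert (Rabs (cos ((a + b) / 2)) <= 1) by (apply Rabs_le; split; lra).
  replace (Rabs ((a - b) / 2)) with (Rabs (a - b) / 2) in H.
  2:{ unfold Rdiv. rewrite Rabs_mult, (Rabs_right (/2)) by lra. auto. }
  replace (Rabs 2) with 2 by (rewrite Rabs_right; lra).
  pose proof (Rabs_pos (sin ((a - b) / 2))). pose proof (Rabs_pos (cos ((a + b) / 2))). nra.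
Qed.

Lemma plo_lip x0 w y0 h a b :
  Rabs (plo x0 w y0 h a - plo x0 w y0 h b) <= (Rabs x0 + Rabs w + Rabs y0 + Rabs h) * Rabs (a - b).
Proof.
  unfold plo.
  pose proof (Rmin0_lip (w * cos a) (w * cos b)). pose proof (Rmin0_lip (h * sin a) (h * sin b)).
  pose proof (cos_lip a b). pose proof (sin_lip a b).
  replace (w * cos a - w * cos b) with (w * (cos a - cos b)) in H by ring.
  replace (h * sin a - h * sin b) with (h * (sin a - sin b)) in H0 by ring.
  rewrite Rabs_mult in H, H0.
  replace (x0 * cos a + y0 * sin a + Rmin 0 (w * cos a) + Rmin 0 (h * sin a) -
   (x0 * cos b + y0 * sin b + Rmin 0 (w * cos b) + Rmin 0 (h * sin b)))
   with (x0 * (cos a - cos b) + y0 * (sin a - sin b) + (Rmin 0 (w * cos a) - Rmin 0 (w * cos b))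
          + (Rmin 0 (h * sin a) - Rmin 0 (h * sin b))) by ring.
  eapply Rle_trans; [apply Rabs_triang|]. eapply Rle_trans; [apply Rplus_le_compat_r, Rabs_triang|].
  eapply Rle_trans; [apply Rplus_le_compat_r, Rplus_le_compat_r, Rabs_triang|].
  rewrite !Rabs_mult.
  pose proof (Rabs_pos x0). pose proof (Rabs_pos y0). pose proof (Rabs_pos w). pose proof (Rabs_pos h).
  nra.
Qed.

Lemma phi_lip x0 w y0 h a b :
  Rabs (phi x0 w y0 h a - phi x0 w y0 h b) <= (Rabs x0 + Rabs w + Rabs y0 + Rabs h) * Rabs (a - b).
Proof.
  unfold phi.
  pose proof (Rmax0_lip (w * cos a) (w * cos b)). pose proof (Rmax0_lip (h * sin a) (h * sin b)).
  pose proof (cos_lip a b). pose proof (sin_lip a b).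
  replace (w * cos a - w * cos b) with (w * (cos a - cos b)) in H by ring.
  replace (h * sin a - h * sin b) with (h * (sin a - sin b)) in H0 by ring.
  rewrite Rabs_mult in H, H0.
  replace (x0 * cos a + y0 * sin a + Rmax 0 (w * cos a) + Rmax 0 (h * sin a) -
   (x0 * cos b + y0 * sin b + Rmax 0 (w * cos b) + Rmax 0 (h * sin b)))
   with (x0 * (cos a - cos b) + y0 * (sin a - sin b) + (Rmax 0 (w * cos a) - Rmax 0 (w * cos b))
          + (Rmax 0 (h * sin a) - Rmax 0 (h * sin b))) by ring.
  eapply Rle_trans; [apply Rabs_triang|]. eapply Rle_trans; [apply Rplus_le_compat_r, Rabs_triang|].
  eapply Rle_trans; [apply Rplus_le_compat_r, Rplus_le_compat_r, Rabs_triang|].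
  rewrite !Rabs_mult.
  pose proof (Rabs_pos x0). pose proof (Rabs_pos y0). pose proof (Rabs_pos w). pose proof (Rabs_pos h).
  nra.
Qed.

Lemma plo_le_phi x0 w y0 h th : plo x0 w y0 h th <= phi x0 w y0 h th.
Proof.
  unfold plo, phi. pose proof (Rmin_l 0 (w * cos th)). pose proof (Rmax_l 0 (w * cos th)).
  pose proof (Rmin_l 0 (h * sin th)). pose proof (Rmax_l 0 (h * sin th)). lra.
Qed.

Lemma lip_cont f K x : 0 <= K -> (forall a b, Rabs (f a - f b) <= K * Rabs (a - b)) -> continuity_pt f x.
Proof.
  intros HK Hf. unfold continuity_pt, continue_in, limit1_in, limit_in.
  intros eps Heps. exists (eps / (K + 1)). split.
  { apply Rdiv_lt_0_compat; lra. }
  intros y [_ Hy]. simpl in *. unfold R_dist in *.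
  eapply Rle_lt_trans; [apply Hf|].
  apply Rle_lt_trans with ((K + 1) * Rabs (y - x)).
  { pose proof (Rabs_pos (y - x)). nra. }
  apply (Rmult_lt_reg_r (/ (K + 1))). { apply Rinv_0_lt_compat. lra. }
  replace ((K + 1) * Rabs (y - x) * / (K + 1)) with (Rabs (y - x)) by (field; lra). auto.
Qed.


Lemma val_bound M e k : 0 <= val M e k <= 3/4.
Proof. unfold val. destruct (Nat.odd _); lra. Qed.

Definition Bv g m n := 1 + sum_f_R0 (fun i => Rabs (cf g m i)) (n - 1).

Lemma V_abs g m n k : Rabs (V g m n k) <= Bv g m n.
Proof.
  unfold V, Bv. eapply Rle_trans; [apply Rabs_triang|].
  apply Rplus_le_compat.
  - pose proof (val_bound (m n) 0 k). rewrite Rabs_right; lra.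
  - eapply Rle_trans; [apply sum_f_R0_triangle|]. apply sum_Rle. intros i _.
    rewrite Rabs_mult. pose proof (val_bound (m n) (m (S i)) k).
    rewrite (Rabs_right (val _ _ _)) by lra. pose proof (Rabs_pos (cf g m i)). nra.
Qed.

Definition Lc g m n := 3 + Bv g m n.

Lemma LOHI_lip g m n k a b : (k <= NN m n)%nat ->
  Rabs (LO g m n a k - LO g m n b k) <= Lc g m n * Rabs (a - b) /\
  Rabs (HI g m n a k - HI g m n b k) <= Lc g m n * Rabs (a - b).
Proof.
  intros Hk. pose proof (Nr_pos m n) as HN.
  assert (HN1 : 1 <= Nr m n).
  { unfold Nr. apply pow_R1_Rle. lra. }
  assert (H1 : Rabs (X0 m n k) <= 1).
  { unfold X0. assert (INR k <= Nr m n) by (rewrite <- NN_Nr; apply le_INR; auto).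
    rewrite Rabs_right.
    - apply (Rmult_le_reg_r (Nr m n)); auto. unfold Rdiv. rewrite Rmult_assoc, Rinv_l; lra.
    - apply Rle_ge. unfold Rdiv. apply Rmult_le_pos; [apply pos_INR|left; apply Rinv_0_lt_compat; lra]. }
  assert (H2 : Rabs (W m n k) <= 1).
  { pose proof (W_nonneg m n k). rewrite Rabs_right by lra. unfold W.
    destruct (Nat.ltb _ _); [|lra]. rewrite <- Rinv_1. apply Rinv_le_contravar; lra. }
  assert (H3 : Rabs (hh m n) <= 1).
  { pose proof (hh_pos m n). rewrite Rabs_right by lra. unfold hh.
    rewrite <- Rinv_1. apply Rinv_le_contravar; [lra|]. apply pow_R1_Rle. lra. }
  pose proof (V_abs g m n k).
  pose proof (Rabs_pos (a - b)).
  unfold LO, HI, Lc. split.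
  - eapply Rle_trans; [apply plo_lip|]. apply Rmult_le_compat_r; auto. lra.
  - eapply Rle_trans; [apply phi_lip|]. apply Rmult_le_compat_r; auto. lra.
Qed.

Lemma proj_has_cover g m n th : mmono m n -> has_cover (proj (En g m n) th).
Proof.
  intros Hm. exists (sum_f_R0 (fun k => HI g m n th k - LO g m n th k) (NN m n)).
  eapply cover_sub; [|apply Uint_cover].
  - intros y Hy. apply proj_En_out; auto.
  - intros k. apply plo_le_phi.
Qed.

Definition Fm g m n th := leb_measure (proj (En g m n) th).

Lemma Fm_shift g m n a b : mmono m n ->
  Fm g m n a <= Fm g m n b + INR (S (NN m n)) * (4 * (Lc g m n * Rabs (a - b))).
Proof.
  intros Hm. unfold Fm.
  apply meas_shift with (lo := LO g m n a) (hi := HI g m n a) (lo' := LO g m n b) (hi' := HI g m n b).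
  - apply Rmult_le_pos; [|apply Rabs_pos]. unfold Lc, Bv.
    pose proof (cond_pos_sum (fun i => Rabs (cf g m i)) (n - 1) (fun i => Rabs_pos _)). lra.
  - intros y Hy. apply proj_En_out; auto.
  - intros k y Hk Hy. eapply proj_En_in; eauto.
  - intros k Hk. apply LOHI_lip; auto.
  - apply proj_has_cover; auto.
Qed.

Lemma Fm_cont g m n x : mmono m n -> continuity_pt (Fm g m n) x.
Proof.
  intros Hm. apply lip_cont with (K := INR (S (NN m n)) * 4 * Lc g m n).
  - unfold Lc, Bv.
    pose proof (cond_pos_sum (fun i => Rabs (cf g m i)) (n - 1) (fun i => Rabs_pos _)).
    pose proof (pos_INR (S (NN m n))). apply Rmult_le_pos; [|lra]. lra.
  - intros a b. pose proof (Fm_shift g m n a b Hm). pose proof (Fm_shift g m n b a Hm).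
    rewrite Rabs_minus_sym in H0. apply Rabs_le. split; lra.
Qed.


Lemma chain (p q : nat -> R) K y : p 0%nat <= y <= q K ->
  (exists k, (k <= K)%nat /\ p k <= y < q k) \/
  (exists k, (k <= K)%nat /\ Rmin (q k) (p (S k)) <= y <= Rmax (q k) (p (S k))).
Proof.
  induction K; intros Hy.
  - destruct (Rlt_le_dec y (q 0%nat)).
    + left. exists 0%nat. split; [lia|lra].
    + right. exists 0%nat. split; [lia|]. replace y with (q 0%nat) by lra.
      split; [apply Rmin_l|apply Rmax_l].
  - destruct (Rle_lt_dec y (q K)).
    + destruct (IHK ltac:(lra)) as [[k [Hk H]]|[k [Hk H]]].
      * left. exists k. split; [lia|auto].
      * right. exists k. split; [lia|auto].
    + destruct (Rle_lt_dec (p (S K)) y).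
      * destruct (Rlt_le_dec y (q (S K))).
        -- left. exists (S K). split; [lia|lra].
        -- right. exists (S K). split; [lia|]. replace y with (q (S K)) by lra.
           split; [apply Rmin_l|apply Rmax_l].
      * right. exists K. split; [lia|].
        split; [eapply Rle_trans; [apply Rmin_l|lra]|eapply Rle_trans; [|apply Rmax_r]; lra].
Qed.

Lemma max_min_abs a b : Rmax a b - Rmin a b = Rabs (a - b).
Proof. unfold Rmax, Rmin, Rabs. destruct (Rle_dec a b); destruct (Rcase_abs (a - b)); lra. Qed.

Definition pp g m n th k := X0 m n k * cos th + V g m n k * sin th.
Definition qq g m n th k := (INR k + 1) / Nr m n * cos th + V g m n k * sin th.

Lemma piece_in g m n th k y : mmono m n -> (k < NN m n)%nat -> 0 < cos th ->
  pp g m n th k <= y < qq g m n th k -> proj (En g m n) th y.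
Proof.
  intros Hm Hk Hc Hy. unfold pp, qq in Hy.
  pose proof (Nr_pos m n) as HN.
  set (x := (y - V g m n k * sin th) / cos th).
  assert (Hx1 : X0 m n k <= x).
  { unfold x. apply (Rmult_le_reg_r (cos th)); auto. unfold Rdiv. rewrite Rmult_assoc, Rinv_l; lra. }
  assert (Hx2 : x < (INR k + 1) / Nr m n).
  { unfold x. apply (Rmult_lt_reg_r (cos th)); auto. unfold Rdiv at 1. rewrite Rmult_assoc, Rinv_l; lra. }
  assert (HX : 0 <= X0 m n k) by (unfold X0; unfold Rdiv; apply Rmult_le_pos; [apply pos_INR|left; apply Rinv_0_lt_compat; lra]).
  assert (Hk1 : (INR k + 1) / Nr m n <= 1).
  { assert (INR k + 1 <= Nr m n) by (rewrite <- NN_Nr, <- S_INR; apply le_INR; lia).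
    apply (Rmult_le_reg_r (Nr m n)); auto. unfold Rdiv. rewrite Rmult_assoc, Rinv_l; lra. }
  exists (x, fn g m n x). split.
  - intros eps Heps. exists (x, fn g m n x). split.
    + exists x, 0. split; [lra|]. split; [split; [lra|left; apply hh_pos]|]. f_equal. ring.
    + simpl. rewrite !Rminus_diag, Rabs_R0. lra.
  - simpl. rewrite (fn_V g m n k x Hm) by (unfold X0, Nr in *; lra).
    unfold x. field. lra.
Qed.

Lemma lower_meas g m n th K : mmono m n -> (K < NN m n)%nat -> 0 < cos th ->
  qq g m n th K - pp g m n th 0 -
  sum_f_R0 (fun k => Rabs (qq g m n th k - pp g m n th (S k))) K <= Fm g m n th.
Proof.
  intros Hm HK Hc. unfold Fm. apply m_ge; [apply proj_has_cover; auto|].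
  intros s Hs.
  set (c := fun k => Rmin (qq g m n th k) (pp g m n th (S k))).
  set (d := fun k => Rmax (qq g m n th k) (pp g m n th (S k))).
  set (e := fun _ : nat => pp g m n th 0).
  pose proof (Fam_cover _ _ c d e e K Hs) as HF.
  assert (Hcov : cover_sum (fun y => pp g m n th 0 <= y <= qq g m n th K)
     (s + sum_f_R0 (fun k => d k - c k + (e k - e k)) K)).
  { eapply cover_sub; [|apply HF].
    - intros y Hy. destruct (chain (pp g m n th) (qq g m n th) K y Hy) as [[k [Hk H]]|[k [Hk H]]].
      + left. apply (piece_in g m n th k); auto. lia.
      + right. exists k. split; auto.
    - intro k. unfold c, d. eapply Rle_trans; [apply Rmin_l|apply Rmax_l].
    - intro k. lra. }
  destruct (Rle_lt_dec (pp g m n th 0) (qq g m n th K)).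
  - pose proof (HB _ _ _ r Hcov).
    assert (sum_f_R0 (fun k => d k - c k + (e k - e k)) K =
            sum_f_R0 (fun k => Rabs (qq g m n th k - pp g m n th (S k))) K).
    { apply sum_eq. intros. unfold c, d. rewrite max_min_abs. ring. }
    lra.
  - pose proof (cover_nonneg _ _ Hs).
    pose proof (cond_pos_sum (fun k => Rabs (qq g m n th k - pp g m n th (S k))) K (fun k => Rabs_pos _)).
    lra.
Qed.


Lemma val0 M e : val M e 0 = 0.
Proof. unfold val. rewrite Nat.Div0.div_0_l. reflexivity. Qed.

Lemma V0 g m n : V g m n 0 = 0.
Proof.
  unfold V. rewrite val0.
  rewrite (sum_eq _ (fun _ => 0)) by (intros; rewrite val0; ring).
  rewrite sum_const_R. ring.
Qed.

Lemma val_step M e k :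
  Rabs (val M e (S k) - val M e k) <= 3/4 * (INR (S k / 4 ^ (M - e)) - INR (k / 4 ^ (M - e))).
Proof.
  set (q := (4 ^ (M - e))%nat).
  assert (Hle : (k / q <= S k / q)%nat) by (apply Nat.Div0.div_le_mono; lia).
  destruct (Nat.eq_dec (k / q) (S k / q)) as [Heq|Hne].
  - unfold val. fold q. rewrite <- Heq. rewrite Rminus_diag, Rabs_R0. lra.
  - assert (INR (k / q) + 1 <= INR (S k / q)) by (rewrite <- S_INR; apply le_INR; lia).
    pose proof (val_bound M e (S k)). pose proof (val_bound M e k).
    apply Rabs_le. split; lra.
Qed.

Lemma telesc (w : nat -> R) K : sum_f_R0 (fun k => w (S k) - w k) K = w (S K) - w 0%nat.
Proof. induction K; [simpl; ring|]. rewrite tech5, IHK. ring. Qed.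

Lemma sum_val_diff M e K :
  sum_f_R0 (fun k => Rabs (val M e (S k) - val M e k)) K <= 3/4 * INR (S K / 4 ^ (M - e)).
Proof.
  eapply Rle_trans.
  - apply sum_Rle. intros k _. apply val_step.
  - rewrite (sum_eq _ (fun k => (INR (S k / 4 ^ (M - e)) - INR (k / 4 ^ (M - e))) * (3/4))) by (intros; ring).
    rewrite <- scal_sum.
    rewrite (telesc (fun k => INR (k / 4 ^ (M - e)))). rewrite Nat.Div0.div_0_l. simpl INR.
    lra.
Qed.

Lemma NN_div m n e : (e <= m n)%nat -> (NN m n / 4 ^ (m n - e) = 4 ^ S e)%nat.
Proof.
  intros He. unfold NN. replace (S (m n)) with (S e + (m n - e))%nat by lia.
  rewrite Nat.pow_add_r. apply Nat.div_mul. apply Nat.pow_nonzero. lia.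
Qed.

Lemma sum_swap (f : nat -> nat -> R) K I :
  sum_f_R0 (fun k => sum_f_R0 (fun i => f i k) I) K = sum_f_R0 (fun i => sum_f_R0 (fun k => f i k) K) I.
Proof.
  induction K.
  - simpl. apply sum_eq. intros. simpl. auto.
  - rewrite tech5, IHK. rewrite <- sum_plus. apply sum_eq. intros. rewrite tech5. auto.
Qed.

Lemma sum_scal_l (c : R) (f : nat -> R) N : sum_f_R0 (fun k => c * f k) N = c * sum_f_R0 f N.
Proof. induction N; simpl; [ring|]. rewrite IHN. ring. Qed.

Lemma TV_bound g m n : mmono m n -> (forall i, 0 <= acoef g (S i)) -> (1 <= NN m n)%nat ->
  sum_f_R0 (fun k => Rabs (V g m n (S k) - V g m n k)) (NN m n - 1)
  <= 3 + 3 * sum_f_R0 (fun i => acoef g (S i)) (n - 1).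
Proof.
  intros Hm Ha HN. set (K := (NN m n - 1)%nat).
  assert (HSK : S K = NN m n) by (unfold K; lia).
  assert (Hcf : forall i, 0 <= cf g m i).
  { intro i. unfold cf. unfold Rdiv. apply Rmult_le_pos; auto. left; apply Rinv_0_lt_compat, pow_lt; lra. }
  set (d := fun e k => Rabs (val (m n) e (S k) - val (m n) e k)).
  assert (Hstep : forall k, Rabs (V g m n (S k) - V g m n k) <=
     d 0%nat k + sum_f_R0 (fun i => cf g m i * d (m (S i)) k) (n - 1)).
  { intro k. unfold V, d.
    replace (val (m n) 0 (S k) + sum_f_R0 (fun i => cf g m i * val (m n) (m (S i)) (S k)) (n - 1) -
      (val (m n) 0 k + sum_f_R0 (fun i => cf g m i * val (m n) (m (S i)) k) (n - 1)))
    with ((val (m n) 0 (S k) - val (m n) 0 k) +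
          sum_f_R0 (fun i => cf g m i * (val (m n) (m (S i)) (S k) - val (m n) (m (S i)) k)) (n - 1)).
    2:{ rewrite (sum_eq (fun i => cf g m i * (val (m n) (m (S i)) (S k) - val (m n) (m (S i)) k))
           (fun i => cf g m i * val (m n) (m (S i)) (S k) - cf g m i * val (m n) (m (S i)) k)) by (intros; ring).
        rewrite minus_sum. ring. }
    eapply Rle_trans; [apply Rabs_triang|]. apply Rplus_le_compat_l.
    eapply Rle_trans; [apply sum_f_R0_triangle|]. apply sum_Rle. intros i _.
    rewrite Rabs_mult, (Rabs_right (cf g m i)) by (apply Rle_ge; auto). lra. }
  eapply Rle_trans; [apply sum_Rle; intros k _; apply Hstep|].
  rewrite sum_plus.
  rewrite (sum_swap (fun i k => cf g m i * d (m (S i)) k)).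
  apply Rplus_le_compat.
  - unfold d. eapply Rle_trans; [apply sum_val_diff|]. rewrite HSK, NN_div by lia.
    simpl. lra.
  - rewrite scal_sum. apply sum_Rle. intros i Hi.
    unfold d. rewrite sum_scal_l.
    pose proof (sum_val_diff (m n) (m (S i)) K).
    rewrite HSK, NN_div in H by (apply Hm; auto).
    rewrite pow_INR, INR4 in H.
    assert (cf g m i * sum_f_R0 (fun k => Rabs (val (m n) (m (S i)) (S k) - val (m n) (m (S i)) k)) K
            <= cf g m i * (3 / 4 * 4 ^ S (m (S i)))) by (apply Rmult_le_compat_l; auto).
    eapply Rle_trans; [exact H0|]. unfold cf. simpl.
    assert (0 < 4 ^ m (S i)) by (apply pow_lt; lra).
    right. field. lra.
Qed.


Lemma V_nonneg g m n k : (forall i, 0 <= acoef g (S i)) -> 0 <= V g m n k.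
Proof.
  intros Ha. unfold V. pose proof (val_bound (m n) 0 k).
  assert (0 <= sum_f_R0 (fun i => cf g m i * val (m n) (m (S i)) k) (n - 1)).
  { apply cond_pos_sum. intro i. apply Rmult_le_pos.
    - unfold cf, Rdiv. apply Rmult_le_pos; auto. left; apply Rinv_0_lt_compat, pow_lt; lra.
    - apply val_bound. }
  lra.
Qed.

Lemma cos_lower th : 1 - th * th / 2 <= cos th.
Proof.
  replace th with (2 * (th / 2)) at 3 by field. rewrite cos_2a_sin.
  pose proof (abs_sin_le (th / 2)).
  assert (sin (th / 2) * sin (th / 2) <= (th / 2) * (th / 2)).
  { pose proof (Rabs_pos (sin (th/2))).
    replace (sin (th / 2) * sin (th / 2)) with (Rabs (sin (th / 2)) * Rabs (sin (th / 2))).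
    2:{ rewrite <- Rabs_mult. apply Rabs_right. apply Rle_ge, Rle_0_sqr. }
    replace (th / 2 * (th / 2)) with (Rabs (th / 2) * Rabs (th / 2)).
    2:{ rewrite <- Rabs_mult. apply Rabs_right. apply Rle_ge, Rle_0_sqr. }
    apply Rmult_le_compat; auto. }
  nra.
Qed.

Lemma F_lower g m n th T : mmono m n -> (forall i, 0 <= acoef g (S i)) ->
  sum_f_R0 (fun k => Rabs (V g m n (S k) - V g m n k)) (NN m n - 1) <= T ->
  0 < cos th -> 0 <= sin th ->
  cos th - sin th * T <= Fm g m n th.
Proof.
  intros Hm Ha HT Hc Hs.
  assert (HN : (1 <= NN m n)%nat) by (unfold NN; pose proof (Nat.pow_nonzero 4 (S (m n))); lia).
  pose proof (lower_meas g m n th (NN m n - 1) Hm ltac:(lia) Hc).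
  assert (Hq : qq g m n th (NN m n - 1) = cos th + V g m n (NN m n - 1) * sin th).
  { unfold qq. replace (INR (NN m n - 1) + 1) with (Nr m n).
    - pose proof (Nr_pos m n). field. lra.
    - rewrite <- NN_Nr. rewrite <- S_INR. f_equal. lia. }
  assert (Hp : pp g m n th 0 = 0).
  { unfold pp, X0. rewrite V0. simpl. unfold Rdiv. ring. }
  assert (Hs2 : sum_f_R0 (fun k => Rabs (qq g m n th k - pp g m n th (S k))) (NN m n - 1)
     = sin th * sum_f_R0 (fun k => Rabs (V g m n (S k) - V g m n k)) (NN m n - 1)).
  { rewrite <- sum_scal_l. apply sum_eq. intros k _. unfold qq, pp, X0.
    rewrite S_INR.
    replace ((INR k + 1) / Nr m n * cos th + V g m n k * sin th -
      ((INR k + 1) / Nr m n * cos th + V g m n (S k) * sin th))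
      with (- ((V g m n (S k) - V g m n k) * sin th)) by ring.
    rewrite Rabs_Ropp, Rabs_mult, (Rabs_right (sin th)) by lra. ring. }
  rewrite Hq, Hp, Hs2 in H.
  pose proof (V_nonneg g m n (NN m n - 1) Ha).
  assert (sin th * sum_f_R0 (fun k => Rabs (V g m n (S k) - V g m n k)) (NN m n - 1) <= sin th * T)
    by (apply Rmult_le_compat_l; auto).
  nra.
Qed.


Lemma sum_ge_first (An : nat -> R) N : (forall i, 0 <= An i) -> An 0%nat <= sum_f_R0 An N.
Proof. intros H. induction N; simpl; [lra|]. specialize (H (S N)). lra. Qed.

Theorem proposition4 (g : nat -> R) (m : nat -> nat)
  (Hg_pos : forall k, (1 <= k)%nat -> 0 < g k)
  (Hg_inc : forall k, (1 <= k)%nat -> g k < g (S k))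
  (Hg_inf : cv_infty g)
  (Hm_pos : forall k, (1 <= k)%nat -> (1 <= m k)%nat)
  (Hm_inc : forall k, (2 <= k)%nat -> (m (k - 1) < m k)%nat)
  (Hm1 : forall k, (2 <= k)%nat -> 1000 / 4 ^ (m k) <= acoef g k / 4 ^ (m (k - 1)%nat))
  (Hm2 : forall k, (2 <= k)%nat -> 1000 / 4 ^ (m k) <= acoef g (k - 1) / 4 ^ (m (k - 1)%nat)) :
  exists c, 0 < c /\
    forall n, (2 <= n)%nat ->
      exists pr : Riemann_integrable (fun th => leb_measure (proj (En g m n) th)) 0 (2 * PI),
        RiemannInt pr / (2 * PI) >= c / sum_f_R0 (fun i => acoef g (S i)) (n - 2).
Proof.
  assert (Hg1 : 0 < g 1%nat) by (apply Hg_pos; lia).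
  assert (Hapos : forall i, 0 < acoef g (S i)).
  { intros [|i]. - simpl. auto.
    - unfold acoef. apply Rmin_glb_lt; [lra|]. pose proof (Hg_inc (S i) ltac:(lia)). lra. }
  assert (Ha0 : forall i, 0 <= acoef g (S i)) by (intro i; left; auto).
  assert (Hmm : forall d j, (1 <= j)%nat -> (m j <= m (j + d))%nat).
  { induction d; intros j Hj. - rewrite Nat.add_0_r. lia.
    - specialize (IHd j Hj). pose proof (Hm_inc (j + S d)%nat ltac:(lia)).
      replace (j + S d - 1)%nat with (j + d)%nat in H by lia. lia. }
  assert (HPI : 3 < PI) by (pose proof PI2_3_2; lra).
  exists (1 / (16 * PI * (6 / g 1%nat + 3))). split.
  { apply Rdiv_lt_0_compat; [lra|]. assert (0 < 6 / g 1%nat) by (apply Rdiv_lt_0_compat; lra). nra. }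
  intros n Hn.
  assert (Hmono : mmono m n).
  { intros i Hi. pose proof (Hmm (n - S i)%nat (S i) ltac:(lia)).
    replace (S i + (n - S i))%nat with n in H by lia. exact H. }
  set (S2 := sum_f_R0 (fun i => acoef g (S i)) (n - 2)).
  assert (HS2 : g 1%nat <= S2).
  { unfold S2. pose proof (sum_ge_first (fun i => acoef g (S i)) (n - 2) Ha0). simpl in H. auto. }
  assert (HSn : sum_f_R0 (fun i => acoef g (S i)) (n - 1) <= S2 + 1).
  { replace (n - 1)%nat with (S (n - 2)) by lia. rewrite tech5. fold S2.
    destruct n as [|[|n']]; [lia|lia|].
    replace (S (S (S (S n') - 2))) with (S (S n')) by lia. unfold acoef; fold S2.
    pose proof (Rmin_l 1 (g (S (S n')) - g (S n'))). lra. }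
  assert (HTV : sum_f_R0 (fun k => Rabs (V g m n (S k) - V g m n k)) (NN m n - 1) <= 6 + 3 * S2).
  { eapply Rle_trans; [apply TV_bound; auto|].
    - unfold NN. pose proof (Nat.pow_nonzero 4 (S (m n))). lia.
    - lra. }
  set (tn := 1 / (4 * (6 + 3 * S2))).
  assert (Htn : 0 < tn) by (unfold tn; apply Rdiv_lt_0_compat; lra).
  assert (Htn2 : tn <= 1 / 24).
  { unfold tn. apply Rmult_le_compat_l; [lra|]. apply Rinv_le_contravar; lra. }
  assert (Hlow : forall th, 0 < th < tn -> 1 / 2 <= Fm g m n th).
  { intros th Hth.
    assert (Hs0 : 0 <= sin th) by (apply sin_ge_0; lra).
    assert (Hs1 : sin th < th) by (apply sin_lt_x; lra).
    pose proof (cos_lower th).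
    assert (th * th <= th * 1) by (apply Rmult_le_compat_l; lra). assert (Hc : 3 / 4 <= cos th) by lra.
    pose proof (F_lower g m n th (6 + 3 * S2) Hmono Ha0 HTV ltac:(lra) Hs0).
    assert (sin th * (6 + 3 * S2) <= tn * (6 + 3 * S2)) by (apply Rmult_le_compat_r; lra).
    assert (tn * (6 + 3 * S2) = 1 / 4) by (unfold tn; field; lra).
    lra. }
  assert (Hcont : forall a b, a <= b -> Riemann_integrable (Fm g m n) a b).
  { intros a b Hab. apply continuity_implies_RiemannInt; auto. intros. apply Fm_cont; auto. }
  assert (H2PI : tn <= 2 * PI) by lra.
  set (pr0 := Hcont 0 (2 * PI) ltac:(lra)).
  exists pr0.
  set (pr1 := Hcont 0 tn ltac:(lra)).
  set (pr2 := Hcont tn (2 * PI) H2PI).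
  pose proof (RiemannInt_P26 pr1 pr2 pr0) as Hch.
  assert (I1 : 1 / 2 * (tn - 0) <= RiemannInt pr1).
  { rewrite <- (RiemannInt_P15 (RiemannInt_P14 0 tn (1 / 2))).
    apply RiemannInt_P19; [lra|]. intros x Hx. unfold fct_cte. apply Hlow. auto. }
  assert (I2 : 0 * (2 * PI - tn) <= RiemannInt pr2).
  { rewrite <- (RiemannInt_P15 (RiemannInt_P14 tn (2 * PI) 0)).
    apply RiemannInt_P19; [lra|]. intros x Hx. unfold fct_cte.
    apply m_nonneg. apply proj_has_cover. auto. }
  assert (Hint : tn / 2 <= RiemannInt pr0) by lra.
  apply Rle_ge.
  assert (HA : tn / 2 / (2 * PI) = 1 / (16 * PI * (6 + 3 * S2))) by (unfold tn; field; lra).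
  assert (HB : 1 / (16 * PI * (6 / g 1%nat + 3)) / S2 = 1 / (16 * PI * ((6 / g 1%nat + 3) * S2))).
  { assert (0 < 6 / g 1%nat) by (apply Rdiv_lt_0_compat; lra). field. repeat split; lra. }
  rewrite HB.
  apply Rle_trans with (tn / 2 / (2 * PI)).
  - rewrite HA. unfold Rdiv. rewrite !Rmult_1_l. apply Rinv_le_contravar.
    + nra.
    + apply Rmult_le_compat_l; [lra|].
      assert (6 <= 6 / g 1%nat * S2).
      { apply (Rmult_le_reg_r (g 1%nat)); auto.
        replace (6 / g 1%nat * S2 * g 1%nat) with (6 * S2) by (field; lra). nra. }
      lra.
  - unfold Rdiv. apply Rmult_le_compat_r; [|exact Hint].
    left. apply Rinv_0_lt_compat. lra.
Qed.
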